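(* Let $X$ be a locally compact Hausdorff space, $\tau$ a topological measure on $X$, and $O\in\mathcal O(X)$. Let $\widehat O=O\cup\{\infty\}$ be the one-point compactification of $O$, so that the open subsets of $\widehat O$ are the open $U\subset O$ and the sets $(O- K)\cup\{\infty\}$ with $K\subset O$ compact, and the compact subsets of $\widehat O$ are the compact $K\subset O$ and the sets $(O- U)\cup\{\infty\}$ with $U\subset O$ open. Define $\widehat\tau_O$ on $\mathcal A(\widehat O)$ by $\widehat\tau_O(U)=\tau(U)$, $\widehat\tau_O(K)=\tau(K)$, $\widehat\tau_O((O- K)\cup\{\infty\})=\tau(O- K)$, $\widehat\tau_O((O- U)\cup\{\infty\})=\tau(O)-\tau(U)$ for $U\subset O$ open and $K\subset O$ compact. Then $\widehat\tau_O$ is a topological measure on $\widehat O$.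
   Context: For a locally compact Hausdorff space $Y$: $\mathcal K(Y)$ is the family of compact subsets, $\mathcal O(Y)$ the family of open subsets with compact closure, $\mathcal A(Y)=\mathcal K(Y)\cup\mathcal O(Y)$ (for compact $Y$, $\mathcal O(Y)$ is all open sets). A topological measure on $Y$ is a function $\tau:\mathcal A(Y)\to[0,\infty)$ such that: (additivity) $\tau(A\cup A')=\tau(A)+\tau(A')$ whenever $A,A'\in\mathcal A(Y)$ are disjoint and $A\cup A'\in\mathcal A(Y)$; (monotonicity) $\tau(A)\le\tau(A')$ for $A\subset A'$ in $\mathcal A(Y)$; (regularity) $\tau(K)=\inf\{\tau(O)\mid O\in\mathcal O(Y),O\supset K\}$ for $K\in\mathcal K(Y)$ and $\tau(O)=\sup\{\tau(K)\mid K\in\mathcal K(Y),K\subset O\}$ for $O\in\mathcal O(Y)$. *)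

(* Defs.v *)
From Stdlib Require Import Reals List.
Open Scope R_scope.

Definition subset {Y : Type} (A B : Y -> Prop) : Prop := forall y, A y -> B y.
Definition setminus {Y : Type} (A B : Y -> Prop) : Y -> Prop := fun y => A y /\ ~ B y.
Definition setU {Y : Type} (A B : Y -> Prop) : Y -> Prop := fun y => A y \/ B y.
Definition disjoint {Y : Type} (A B : Y -> Prop) : Prop := forall y, A y -> B y -> False.

Definition is_topology {Y : Type} (opn : (Y -> Prop) -> Prop) : Prop :=
  opn (fun _ => True) /\ opn (fun _ => False) /\
  (forall U V, opn U -> opn V -> opn (fun y => U y /\ V y)) /\
  (forall F : (Y -> Prop) -> Prop, (forall U, F U -> opn U) ->
     opn (fun y => exists U, F U /\ U y)).

Definition is_compact {Y : Type} (opn : (Y -> Prop) -> Prop) (K : Y -> Prop) : Prop :=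
  forall F : (Y -> Prop) -> Prop,
    (forall U, F U -> opn U) ->
    (forall y, K y -> exists U, F U /\ U y) ->
    exists l : list (Y -> Prop),
      (forall U, In U l -> F U) /\ (forall y, K y -> exists U, In U l /\ U y).

Definition closed {Y : Type} (opn : (Y -> Prop) -> Prop) (C : Y -> Prop) : Prop :=
  opn (fun y => ~ C y).

Definition closure {Y : Type} (opn : (Y -> Prop) -> Prop) (A : Y -> Prop) : Y -> Prop :=
  fun y => forall C, closed opn C -> subset A C -> C y.

Definition hausdorff {Y : Type} (opn : (Y -> Prop) -> Prop) : Prop :=
  forall x y : Y, x <> y -> exists U V, opn U /\ opn V /\ U x /\ V y /\ disjoint U V.

Definition locally_compact {Y : Type} (opn : (Y -> Prop) -> Prop) : Prop :=
  forall x : Y, exists U, opn U /\ U x /\ is_compact opn (closure opn U).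

Definition KY {Y : Type} (opn : (Y -> Prop) -> Prop) (K : Y -> Prop) : Prop := is_compact opn K.
Definition OY {Y : Type} (opn : (Y -> Prop) -> Prop) (U : Y -> Prop) : Prop :=
  opn U /\ is_compact opn (closure opn U).
Definition AY {Y : Type} (opn : (Y -> Prop) -> Prop) (A : Y -> Prop) : Prop :=
  KY opn A \/ OY opn A.

Definition is_glb (E : R -> Prop) (m : R) : Prop :=
  (forall x, E x -> m <= x) /\ (forall b, (forall x, E x -> b <= x) -> b <= m).

(* topological measure: tau : A(Y) -> [0,oo); values of tau outside A(Y) are irrelevant *)
Definition topological_measure {Y : Type} (opn : (Y -> Prop) -> Prop)
    (tau : (Y -> Prop) -> R) : Prop :=
  (forall A, AY opn A -> 0 <= tau A) /\
  (forall A A', AY opn A -> AY opn A' -> disjoint A A' -> AY opn (setU A A') ->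
     tau (setU A A') = tau A + tau A') /\
  (forall A A', AY opn A -> AY opn A' -> subset A A' -> tau A <= tau A') /\
  (forall K, KY opn K ->
     is_glb (fun r => exists U, OY opn U /\ subset K U /\ r = tau U) (tau K)) /\
  (forall U, OY opn U ->
     is_lub (fun r => exists K, KY opn K /\ subset K U /\ r = tau K) (tau U)).

(* One-point compactification of O: carrier option {x | O x}, None = infinity. *)
Definition trace {X : Type} {O : X -> Prop} (V : option {x : X | O x} -> Prop) : X -> Prop :=
  fun x => exists h : O x, V (Some (exist _ x h)).

Definition lift {X : Type} (O : X -> Prop) (A : X -> Prop) (inf : Prop)
  : option {x : X | O x} -> Prop :=
  fun p => match p with None => inf | Some x => A (proj1_sig x) end.

Definition hat_open {X : Type} (opn : (X -> Prop) -> Prop) (O : X -> Prop)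
    (V : option {x : X | O x} -> Prop) : Prop :=
  (~ V None /\ opn (trace V)) \/
  (V None /\ is_compact opn (setminus O (trace V))).

(* Main.v *)
Require Import Defs.
From Stdlib Require Import Reals Lra List Classical FunctionalExtensionality PropExtensionality ProofIrrelevance.
Open Scope R_scope.

Lemma pext {Y : Type} (A B : Y -> Prop) : (forall y, A y <-> B y) -> A = B.
Proof. intro H; apply functional_extensionality; intro y; apply propositional_extensionality; auto. Qed.

Lemma open_nbhd {Y : Type} (opn : (Y->Prop)->Prop) (A : Y -> Prop) :
  is_topology opn -> (forall x, A x -> exists U, opn U /\ U x /\ subset U A) -> opn A.
Proof.
  intros [_ [_ [_ Hun]]] H.
  assert (E : (fun y => exists U, (fun U => opn U /\ subset U A) U /\ U y) = A).
  { apply pext. intro y; split.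
    + intros [U [[_ HUA] HUy]]. apply HUA, HUy.
    + intro Hy. destruct (H y Hy) as [U [HU [HUy HUA]]]. exists U; auto. }
  rewrite <- E. apply Hun. intros U [HU _]; exact HU.
Qed.

Lemma list_choice {A B : Type} (P : A -> B -> Prop) (l : list A) :
  (forall a, In a l -> exists b, P a b) ->
  exists l', (forall b, In b l' -> exists a, In a l /\ P a b) /\
             (forall a, In a l -> exists b, In b l' /\ P a b).
Proof.
  induction l as [|a l IH]; intro H.
  - exists nil. split; intros ? [].
  - destruct IH as [l' [H1 H2]]. { intros a' Ha'; apply H; right; auto. }
    destruct (H a (or_introl eq_refl)) as [b Hb].
    exists (b :: l'). split.
    + intros b' [<-|Hb']. * exists a; split; auto. left; auto.
      * destruct (H1 b' Hb') as [a' [? ?]]. exists a'; split; auto. right; auto.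
    + intros a' [<-|Ha']. * exists b; split; auto. left; auto.
      * destruct (H2 a' Ha') as [b' [? ?]]. exists b'; split; auto. right; auto.
Qed.

Lemma list_filter_ex {A : Type} (F : A -> Prop) (l : list A) :
  exists l', (forall a, In a l' -> F a) /\ (forall a, In a l -> F a -> In a l').
Proof.
  induction l as [|a l IH].
  - exists nil. split; intros ? [].
  - destruct IH as [l' [H1 H2]]. destruct (classic (F a)) as [Fa|nFa].
    + exists (a :: l'). split.
      * intros b [<-|Hb]; auto.
      * intros b [<-|Hb] Fb; [left; auto| right; auto].
    + exists l'. split; auto. intros b [<-|Hb] Fb; [contradiction| auto].
Qed.

Lemma sep_compact {Y : Type} (opn : (Y->Prop)->Prop) (K : Y->Prop) (x : Y) :
  is_topology opn -> is_compact opn K ->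
  (forall y, K y -> exists U P, opn U /\ opn P /\ U y /\ P x /\ disjoint U P) ->
  exists Q P, opn Q /\ opn P /\ P x /\ subset K Q /\ disjoint Q P.
Proof.
 intros Ht HK H.
 destruct (HK (fun U => opn U /\ exists P, opn P /\ P x /\ disjoint U P)) as [l [Hl Hcov]].
 - intros U [HU _]; exact HU.
 - intros y Hy. destruct (H y Hy) as [U [P [HU [HP [HUy [HPx Hd]]]]]].
   exists U. split; [split; [exact HU| exists P; auto] | exact HUy].
 - assert (HP : exists P, opn P /\ P x /\ forall U, In U l -> disjoint U P).
   { clear Hcov. induction l as [|U l IH].
     - exists (fun _ => True). destruct Ht as [Ht _]. repeat split; auto. intros U [].
     - destruct IH as [P [HP [HPx HPd]]]. { intros V HV; apply Hl; right; exact HV. }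
       destruct (Hl U (or_introl eq_refl)) as [_ [P' [HP' [HP'x Hd']]]].
       exists (fun y => P y /\ P' y). destruct Ht as [_ [_ [Hint _]]].
       split; [apply Hint; auto|]. split; [auto|].
       intros V [<-|HV] y HVy [Py P'y].
       + exact (Hd' y HVy P'y).
       + exact (HPd V HV y HVy Py). }
   destruct HP as [P [HP [HPx HPd]]].
   exists (fun y => exists U, In U l /\ U y), P. split.
   + destruct Ht as [_ [_ [_ Hun]]]. apply (Hun (fun U => In U l)). intros U HU; apply (Hl U HU).
   + split; auto. split; auto. split.
     * intros y Hy. exact (Hcov y Hy).
     * intros y [U [HU HUy]] Py. exact (HPd U HU y HUy Py).
Qed.

Lemma compact_closed {Y : Type} (opn : (Y->Prop)->Prop) (K : Y -> Prop) :
  is_topology opn -> hausdorff opn -> is_compact opn K -> opn (fun y => ~ K y).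
Proof.
  intros Ht Hh HK. apply open_nbhd; auto. intros x Hx.
  destruct (sep_compact opn K x Ht HK) as [Q [P [HQ [HP [HPx [HKQ Hd]]]]]].
  - intros y Hy. assert (Hne : x <> y) by (intro; subst; auto).
    destruct (Hh x y Hne) as [U [V [HU [HV [HUx [HVy Hd]]]]]].
    exists V, U. repeat split; auto. intros z Vz Uz; exact (Hd z Uz Vz).
  - exists P. split; auto. split; auto. intros y Py Ky. exact (Hd y (HKQ y Ky) Py).
Qed.

Lemma compact_closed_inter {Y : Type} (opn : (Y->Prop)->Prop) (K C : Y -> Prop) :
  is_compact opn K -> opn (fun y => ~ C y) -> is_compact opn (fun y => K y /\ C y).
Proof.
  intros HK HC F HF Hcov.
  destruct (HK (fun U => F U \/ U = (fun y => ~ C y))) as [l [Hl Hc]].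
  - intros U [HU| ->]; auto.
  - intros y Ky. destruct (classic (C y)) as [Cy|nCy].
    + destruct (Hcov y (conj Ky Cy)) as [U [HU HUy]]. exists U; auto.
    + exists (fun y => ~ C y); auto.
  - destruct (list_filter_ex F l) as [l' [Hl'1 Hl'2]]. exists l'. split; auto.
    intros y [Ky Cy]. destruct (Hc y Ky) as [U [HU HUy]]. destruct (Hl U HU) as [HFU| E].
    + exists U; auto.
    + subst U. contradiction.
Qed.

Lemma compact_union {Y : Type} (opn : (Y->Prop)->Prop) (K K' : Y->Prop) :
  is_compact opn K -> is_compact opn K' -> is_compact opn (setU K K').
Proof.
  intros HK HK' F HF Hcov.
  destruct (HK F HF) as [l [Hl Hc]]. { intros y Hy; apply Hcov; left; auto. }
  destruct (HK' F HF) as [l' [Hl' Hc']]. { intros y Hy; apply Hcov; right; auto. }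
  exists (l ++ l'). split.
  - intros U HU; apply in_app_or in HU; destruct HU; auto.
  - intros y [Hy|Hy]; [destruct (Hc y Hy) as [U [? ?]] | destruct (Hc' y Hy) as [U [? ?]]];
      exists U; split; auto; apply in_or_app; auto.
Qed.

Lemma closure_closed {Y : Type} (opn : (Y->Prop)->Prop) (A : Y -> Prop) :
  is_topology opn -> opn (fun y => ~ closure opn A y).
Proof.
  intro Ht. apply open_nbhd; auto. intros x Hx. unfold closure in Hx.
  apply not_all_ex_not in Hx. destruct Hx as [C HC].
  apply imply_to_and in HC as [HC1 HC2]. apply imply_to_and in HC2 as [HC2 HC3].
  exists (fun y => ~ C y). split; [exact HC1|]. split; auto.
  intros y nCy Hcy. apply nCy, Hcy; auto.
Qed.

Lemma closure_mono {Y : Type} (opn : (Y->Prop)->Prop) (A B : Y -> Prop) :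
  subset A B -> subset (closure opn A) (closure opn B).
Proof. intros Hab y Hy C HC HBC; apply Hy; auto; intros z Az; apply HBC, Hab, Az. Qed.

Lemma closure_incl {Y : Type} (opn : (Y->Prop)->Prop) (A : Y -> Prop) :
  subset A (closure opn A).
Proof. intros y Ay C HC HAC; apply HAC; auto. Qed.

Lemma compact_closure_sub {Y : Type} (opn : (Y->Prop)->Prop) (O A : Y -> Prop) :
  is_topology opn -> is_compact opn (closure opn O) -> subset A O ->
  is_compact opn (closure opn A).
Proof.
  intros Ht HO HAO.
  assert (E : (fun y => closure opn O y /\ closure opn A y) = closure opn A).
  { apply pext; intro y; split; [tauto|]. intro H; split; auto.
    exact (closure_mono opn A O HAO y H). }
  rewrite <- E. apply compact_closed_inter; auto. apply closure_closed; auto.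
Qed.

Lemma compact_whole_closure {Y : Type} (opn : (Y->Prop)->Prop) (V : Y -> Prop) :
  is_compact opn (fun _ => True) -> is_compact opn (closure opn V).
Proof.
  intros HT F HF Hcov.
  destruct (HT (fun U => F U \/ exists C, closed opn C /\ subset V C /\ U = (fun y => ~ C y)))
    as [l [Hl Hc]].
  - intros U [HU | [C [HC [_ E]]]]; auto. subst U; exact HC.
  - intros y _. destruct (classic (closure opn V y)) as [Hy|Hy].
    + destruct (Hcov y Hy) as [U [? ?]]; exists U; auto.
    + unfold closure in Hy. apply not_all_ex_not in Hy as [C HC].
      apply imply_to_and in HC as [HC1 HC2]. apply imply_to_and in HC2 as [HC2 HC3].
      exists (fun y => ~ C y). split; auto. right. exists C; auto.
  - destruct (list_filter_ex F l) as [l' [Hl'1 Hl'2]]. exists l'. split; auto.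
    intros y Hy. destruct (Hc y I) as [U [HU HUy]].
    destruct (Hl U HU) as [HFU | [C [HC [HVC E]]]].
    + exists U; auto.
    + subst U. exfalso. apply HUy. apply Hy; auto.
Qed.

Lemma compact_transfer {Y1 Y2 : Type} (opn1 : (Y1->Prop)->Prop) (opn2 : (Y2->Prop)->Prop)
  (R : Y1 -> Y2 -> Prop) (K1 : Y1 -> Prop) (K2 : Y2 -> Prop) :
  is_compact opn1 K1 ->
  (forall U, opn2 U -> opn1 (fun y1 => exists y2, R y1 y2 /\ U y2)) ->
  (forall y1, K1 y1 -> exists y2, R y1 y2 /\ K2 y2) ->
  (forall y2, K2 y2 -> exists y1, K1 y1 /\ R y1 y2) ->
  (forall y1 y2 y2', R y1 y2 -> R y1 y2' -> y2 = y2') ->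
  is_compact opn2 K2.
Proof.
  intros HK Hopn H12 H21 Hfun F2 HF2 Hcov2.
  destruct (HK (fun W => exists U, F2 U /\ W = (fun y1 => exists y2, R y1 y2 /\ U y2)))
    as [l1 [Hl1 Hc1]].
  - intros W [U [HU E]]. subst W. apply Hopn, HF2, HU.
  - intros y1 Hy1. destruct (H12 y1 Hy1) as [y2 [HR HK2]].
    destruct (Hcov2 y2 HK2) as [U [HU HUy]].
    exists (fun y1 => exists y2, R y1 y2 /\ U y2). split; [exists U; auto| exists y2; auto].
  - destruct (list_choice (fun W U => F2 U /\ W = (fun y1 => exists y2, R y1 y2 /\ U y2)) l1 Hl1)
      as [l2 [Hl2a Hl2b]].
    exists l2. split.
    + intros U HU. destruct (Hl2a U HU) as [W [_ [? _]]]; auto.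
    + intros y2 Hy2. destruct (H21 y2 Hy2) as [y1 [Hy1 HR]].
      destruct (Hc1 y1 Hy1) as [W [HW HWy]].
      destruct (Hl2b W HW) as [U [HU [_ E]]]. subst W.
      destruct HWy as [y2' [HR' HU']]. exists U; split; auto.
      rewrite (Hfun y1 y2 y2' HR HR'); auto.
Qed.

Lemma trace_lift {X : Type} (O A : X -> Prop) (b : Prop) :
  trace (lift O A b) = (fun x => O x /\ A x).
Proof. apply pext; intro x; unfold trace, lift; simpl; split.
  - intros [h H]; auto.
  - intros [h H]; exists h; exact H. Qed.

Lemma trace_some {X : Type} {O : X -> Prop} (V : option {x : X | O x} -> Prop) x (h : O x) :
  trace V x -> V (Some (exist _ x h)).
Proof. intros [h' H]. rewrite (proof_irrelevance _ h h'); exact H. Qed.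

Lemma trace_sub {X : Type} {O : X -> Prop} (V : option {x : X | O x} -> Prop) :
  subset (trace V) O.
Proof. intros x [h _]; exact h. Qed.

Lemma hat_eq_noinf {X : Type} {O : X -> Prop} (V : option {x : X | O x} -> Prop) :
  ~ V None -> V = lift O (trace V) False.
Proof.
  intro HV. apply pext; intros [[x h]|]; simpl.
  - split; [intro; exists h; auto| apply trace_some].
  - split; [auto| intros []].
Qed.

Lemma hat_eq_inf {X : Type} {O : X -> Prop} (V : option {x : X | O x} -> Prop) :
  V None -> V = lift O (setminus O (setminus O (trace V))) True.
Proof.
  intro HV. apply pext; intros [[x h]|]; simpl; unfold setminus.
  - split.
    + intro H; split; auto. intros [_ H']; apply H'; exists h; auto.
    + intros [_ H]; apply trace_some. apply NNPP; intro; apply H; split; auto.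
  - tauto.
Qed.

Lemma hat_open_trace {X : Type} (opn : (X->Prop)->Prop) (O : X -> Prop)
  (Htop : is_topology opn) (Hh : hausdorff opn) (HOo : opn O) V :
  hat_open opn O V -> opn (trace V).
Proof.
  intros [[_ H]|[_ H]]; auto.
  assert (E : (fun x => O x /\ ~ setminus O (trace V) x) = trace V).
  { apply pext; intro x; unfold setminus; split.
    - intros [Ox n]. apply NNPP; intro nt; apply n; split; auto.
    - intros [h Hv]; split; auto. intros [_ n]; apply n; exists h; auto. }
  rewrite <- E. pose proof Htop as Ht'. destruct Ht' as [_ [_ [Hint _]]]. apply Hint; auto.
  apply compact_closed; auto.
Qed.

Lemma hat_open_lift_open {X : Type} (opn : (X->Prop)->Prop) (O : X -> Prop)
  (Htop : is_topology opn) (HOo : opn O) U :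
  opn U -> hat_open opn O (lift O U False).
Proof.
  intro HU. left; split; [simpl; tauto|]. rewrite trace_lift.
  destruct Htop as [_ [_ [Hint _]]]. apply Hint; auto.
Qed.

Lemma setminus_co {X : Type} (O K : X -> Prop) :
  subset K O -> setminus O (fun x => O x /\ setminus O K x) = K.
Proof.
  intro HK. apply pext; intro x; unfold setminus; split.
  - intros [Ox n]. apply NNPP; intro nK; apply n; split; auto.
  - intro Kx; split; [apply HK; auto| intros [_ [_ n]]; auto].
Qed.

Lemma hat_open_lift_co {X : Type} (opn : (X->Prop)->Prop) (O : X -> Prop) K :
  is_compact opn K -> subset K O -> hat_open opn O (lift O (setminus O K) True).
Proof.
  intros HK HKO. right; split; [simpl; auto|]. rewrite trace_lift, setminus_co; auto.
Qed.

Lemma hat_compact_trace {X : Type} (opn : (X->Prop)->Prop) (O : X -> Prop)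
  (Htop : is_topology opn) (HOo : opn O) A :
  is_compact (hat_open opn O) A -> ~ A None -> is_compact opn (trace A).
Proof.
  intros HA HN.
  apply (compact_transfer (hat_open opn O) opn
           (fun p x => exists h, p = Some (exist _ x h)) A (trace A) HA).
  - intros U HU. 
    assert (E : (fun y1 => exists y2, (exists h, y1 = Some (exist _ y2 h)) /\ U y2)
              = lift O U False).
    { apply pext; intros [[x h]|]; simpl; split.
      - intros [y2 [[h' E] Hu]]. injection E; intros; subst; auto.
      - intro Hu; exists x; split; auto. exists h; auto.
      - intros [y2 [[h' E] Hu]]. discriminate.
      - intros []. }
    rewrite E. apply hat_open_lift_open; auto.
  - intros [[x h]|] Hp; [|contradiction]. exists x; split; [exists h; auto| exists h; auto].
  - intros x [h Hx]. exists (Some (exist _ x h)). split; auto. exists h; auto.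
  - intros p x x' [h E] [h' E']. subst p. injection E'; auto.
Qed.

Lemma lift_compact {X : Type} (opn : (X->Prop)->Prop) (O : X -> Prop)
  (Htop : is_topology opn) (Hh : hausdorff opn) (HOo : opn O) K :
  is_compact opn K -> subset K O -> is_compact (hat_open opn O) (lift O K False).
Proof.
  intros HK HKO.
  apply (compact_transfer opn (hat_open opn O)
           (fun x p => exists h, p = Some (exist _ x h)) K (lift O K False) HK).
  - intros V HV.
    assert (E : (fun y1 => exists y2, (exists h, y2 = Some (exist _ y1 h)) /\ V y2) = trace V).
    { apply pext; intro x; split.
      - intros [p [[h E] Hv]]; subst p; exists h; auto.
      - intros [h Hv]. exists (Some (exist _ x h)); split; auto. exists h; auto. }
    rewrite E. apply hat_open_trace; auto.
  - intros x Kx. exists (Some (exist _ x (HKO x Kx))). split; [eexists; eauto| simpl; auto].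
  - intros [[x h]|] Hp; simpl in Hp; [|contradiction]. exists x; split; auto. exists h; auto.
  - intros x p p' [h E] [h' E']. subst. rewrite (proof_irrelevance _ h h'); auto.
Qed.

Lemma lift_co_compact {X : Type} (opn : (X->Prop)->Prop) (O : X -> Prop)
  (Htop : is_topology opn) (Hh : hausdorff opn) (HOo : opn O) U :
  opn U -> is_compact (hat_open opn O) (lift O (setminus O U) True).
Proof.
  intros HU F HF Hcov.
  destruct (Hcov None I) as [V0 [HV0 HV0N]].
  assert (HK0 : is_compact opn (setminus O (trace V0))).
  { destruct (HF V0 HV0) as [[n _]|[_ H]]; [contradiction| exact H]. }
  assert (HK1 : is_compact opn (fun x => setminus O (trace V0) x /\ ~ U x)).
  { apply compact_closed_inter; auto.
    assert (E : (fun y => ~ ~ U y) = U) by (apply pext; intro; split; [apply NNPP| auto]).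
    rewrite E; auto. }
  assert (HK2 := lift_compact opn O Htop Hh HOo _ HK1).
  destruct (HK2 (fun x Hx => proj1 (proj1 Hx)) F HF) as [l [Hl Hc]].
  - intros [[x h]|] Hp; simpl in Hp; [|contradiction].
    apply Hcov. simpl. unfold setminus in *. tauto.
  - exists (V0 :: l). split.
    + intros V [<-|HV]; auto.
    + intros [[x h]|] Hp.
      * destruct (classic (trace V0 x)) as [Ht|Ht].
        -- exists V0; split; [left; auto| apply trace_some; auto].
        -- destruct (Hc (Some (exist _ x h))) as [V [HV HVp]].
           ++ simpl in *. unfold setminus in *. tauto.
           ++ exists V; split; [right|]; auto.
      * exists V0; split; [left|]; auto.
Qed.

Lemma hat_whole_compact {X : Type} (opn : (X->Prop)->Prop) (O : X -> Prop)
  (Htop : is_topology opn) (Hh : hausdorff opn) (HOo : opn O) :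
  is_compact (hat_open opn O) (fun _ => True).
Proof.
  assert (E : lift O (setminus O (fun _ => False)) True = (fun _ => True)).
  { apply pext; intros [[x h]|]; simpl; unfold setminus; tauto. }
  rewrite <- E. apply lift_co_compact; auto. destruct Htop as [_ [H _]]; exact H.
Qed.

Lemma hat_OY {X : Type} (opn : (X->Prop)->Prop) (O : X -> Prop)
  (Htop : is_topology opn) (Hh : hausdorff opn) (HOo : opn O) V :
  hat_open opn O V -> OY (hat_open opn O) V.
Proof.
  intro HV; split; auto. apply compact_whole_closure. apply hat_whole_compact; auto.
Qed.

Lemma nbhd_in_O {X : Type} (opn : (X->Prop)->Prop) (O : X -> Prop)
  (Htop : is_topology opn) (Hh : hausdorff opn) (Hlc : locally_compact opn) (HOo : opn O) x :
  O x -> exists N K, opn N /\ is_compact opn K /\ N x /\ subset N K /\ subset K O.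
Proof.
  intro Ox. destruct (Hlc x) as [W [HW [HWx HC]]].
  assert (Enn : forall P : X -> Prop, (fun y => ~ ~ P y) = P)
    by (intro P; apply pext; intro; split; [apply NNPP| auto]).
  assert (HD : is_compact opn (fun y => closure opn W y /\ ~ O y)).
  { apply compact_closed_inter; auto. rewrite Enn; auto. }
  destruct (sep_compact opn _ x Htop HD) as [Q [P [HQ [HP [HPx [HDQ Hd]]]]]].
  - intros y [_ Hy]. assert (Hne : y <> x) by (intro; subst; auto).
    destruct (Hh y x Hne) as [U [P [? [? [? [? ?]]]]]]. exists U, P; auto.
  - exists (fun y => W y /\ P y), (fun y => closure opn W y /\ ~ Q y).
    destruct Htop as [T1 [T2 [Hint Hun]]]. split; [apply Hint; auto|].
    split; [apply compact_closed_inter; auto; rewrite Enn; auto|].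
    split; [auto|]. split.
    + intros y [Wy Py]. split; [apply closure_incl; auto| intro Qy; exact (Hd y Qy Py)].
    + intros y [Cy nQ]. apply NNPP; intro nO. apply nQ, HDQ; split; auto.
Qed.

Lemma hat_compact_inf {X : Type} (opn : (X->Prop)->Prop) (O : X -> Prop)
  (Htop : is_topology opn) (Hh : hausdorff opn) (Hlc : locally_compact opn) (HOo : opn O) A :
  is_compact (hat_open opn O) A -> A None -> opn (setminus O (trace A)).
Proof.
  intros HA HAN. apply open_nbhd; auto. intros x [Ox nt].
  destruct (nbhd_in_O opn O Htop Hh Hlc HOo x Ox) as [N [K [HN [HK [HNx [HNK HKO]]]]]].
  assert (HKh : is_compact (hat_open opn O) (fun p => A p /\ lift O K False p)).
  { apply compact_closed_inter; auto. right. split; [simpl; auto|].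
    assert (E : setminus O (trace (fun p => ~ lift O K False p)) = K).
    { apply pext; intro y; unfold setminus, trace; simpl; split.
      - intros [Oy n]. apply NNPP; intro nK; apply n; exists Oy; auto.
      - intro Ky; split; auto. intros [h n]; auto. }
    rewrite E; auto. }
  assert (HT := hat_compact_trace opn O Htop HOo _ HKh (fun H => proj2 H)).
  assert (HC := compact_closed opn _ Htop Hh HT).
  exists (fun y => N y /\ ~ trace (fun p => A p /\ lift O K False p) y).
  destruct Htop as [_ [_ [Hint _]]]. split; [apply Hint; auto|]. split.
  - split; auto. intros [h [HAp _]]. apply nt; exists h; auto.
  - intros y [Ny n]. split; [apply HKO, HNK; auto|]. intros [h HAy]. apply n.
    exists h; split; auto. simpl. apply HNK; auto.
Qed.

Theorem lemma2p2 (X : Type) (opn : (X -> Prop) -> Prop)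
  (Htop : is_topology opn) (Hhaus : hausdorff opn) (Hlc : locally_compact opn)
  (tau : (X -> Prop) -> R) (Htau : topological_measure opn tau)
  (O : X -> Prop) (HO : OY opn O)
  (tauh : (option {x : X | O x} -> Prop) -> R)
  (H1 : forall U, opn U -> subset U O -> tauh (lift O U False) = tau U)
  (H2 : forall K, is_compact opn K -> subset K O -> tauh (lift O K False) = tau K)
  (H3 : forall K, is_compact opn K -> subset K O ->
          tauh (lift O (setminus O K) True) = tau (setminus O K))
  (H4 : forall U, opn U -> subset U O ->
          tauh (lift O (setminus O U) True) = tau O - tau U) :
  topological_measure (hat_open opn O) tauh.
Proof.
  assert (HOo : opn O) by apply HO.
  pose proof Htop as Ht'. destruct Ht' as [_ [_ [Hint _]]].
  destruct Htau as [Hnn [Hadd [Hmono [Hreg1 Hreg2]]]].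
  assert (OYsub : forall U, opn U -> subset U O -> OY opn U).
  { intros U HU HUO. split; auto. apply (compact_closure_sub opn O U Htop (proj2 HO) HUO). }
  assert (HOA : AY opn O) by (right; exact HO).
  assert (smsub : forall A, subset (setminus O A) O) by (intros A x [h _]; exact h).
  assert (add_compl : forall K, is_compact opn K -> subset K O ->
            tau (setminus O K) = tau O - tau K).
  { intros K HK HKO.
    assert (Hop : opn (setminus O K)).
    { unfold setminus. apply Hint; auto. apply compact_closed; auto. }
    assert (E : setU K (setminus O K) = O).
    { apply pext; intro x; unfold setU, setminus; split.
      - intros [Kx|[Ox _]]; auto.
      - intro Ox; destruct (classic (K x)); auto. }
    assert (Ha := Hadd K (setminus O K) (or_introl HK) (or_intror (OYsub _ Hop (smsub K)))).
    rewrite E in Ha. assert (Ha' := Ha (fun x Kx H => proj2 H Kx) HOA). lra. }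
  assert (inner : forall A r, AY opn A ->
            (forall K, KY opn K -> subset K A -> tau K <= r) -> tau A <= r).
  { intros A r [HA|HA] H.
    - apply H; auto. intros x Hx; exact Hx.
    - apply (proj2 (Hreg2 A HA)). intros s [K [HK [HKA ->]]]. apply H; auto. }
  assert (disj_sum : forall T C, AY opn T -> AY opn C -> subset T O -> subset C O ->
            disjoint T C -> tau T + tau C <= tau O).
  { intros T C HT HC HTO HCO Hd.
    cut (tau C <= tau O - tau T); [lra|].
    apply inner; auto. intros K' HK' HK'C.
    cut (tau T <= tau O - tau K'); [lra|].
    apply inner; auto. intros K HK HKT.
    assert (HU : KY opn (setU K K')) by (apply compact_union; auto).
    assert (Hd' : disjoint K K') by (intros x Kx K'x; exact (Hd x (HKT x Kx) (HK'C x K'x))).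
    cut (tau K + tau K' <= tau O); [lra|].
    rewrite <- (Hadd K K' (or_introl HK) (or_introl HK') Hd' (or_introl HU)).
    apply Hmono; auto. left; auto.
    intros x [Kx|Kx]; [apply HTO, HKT| apply HCO, HK'C]; auto. }
  assert (valK0 : forall A, KY (hat_open opn O) A -> ~ A None ->
            KY opn (trace A) /\ tauh A = tau (trace A)).
  { intros A HA HN. assert (HK := hat_compact_trace opn O Htop HOo A HA HN). split; auto.
    transitivity (tauh (lift O (trace A) False)); [f_equal; apply hat_eq_noinf; auto|].
    apply H2; auto. apply trace_sub. }
  assert (valO0 : forall A, OY (hat_open opn O) A -> ~ A None ->
            opn (trace A) /\ tauh A = tau (trace A)).
  { intros A [HA _] HN. assert (Hop : opn (trace A)).
    { destruct HA as [[_ H]|[H _]]; [exact H| contradiction]. }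
    split; auto.
    transitivity (tauh (lift O (trace A) False)); [f_equal; apply hat_eq_noinf; auto|].
    apply H1; auto. apply trace_sub. }
  assert (valK1 : forall A, KY (hat_open opn O) A -> A None ->
            opn (setminus O (trace A)) /\ tauh A = tau O - tau (setminus O (trace A))).
  { intros A HA HN. assert (Hop := hat_compact_inf opn O Htop Hhaus Hlc HOo A HA HN).
    split; auto.
    transitivity (tauh (lift O (setminus O (setminus O (trace A))) True));
      [f_equal; apply hat_eq_inf; auto|].
    apply H4; auto. }
  assert (valO1 : forall A, OY (hat_open opn O) A -> A None ->
            KY opn (setminus O (trace A)) /\ tauh A = tau O - tau (setminus O (trace A))).
  { intros A [HA _] HN. assert (HK : is_compact opn (setminus O (trace A))).
    { destruct HA as [[H _]|[_ H]]; [contradiction| exact H]. }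
    split; auto.
    transitivity (tauh (lift O (setminus O (setminus O (trace A))) True));
      [f_equal; apply hat_eq_inf; auto|].
    rewrite H3; auto. }
  assert (classify : forall A, AY (hat_open opn O) A ->
     (~ A None /\ AY opn (trace A) /\ tauh A = tau (trace A)) \/
     (A None /\ AY opn (setminus O (trace A)) /\ tauh A = tau O - tau (setminus O (trace A)))).
  { intros A HA. destruct (classic (A None)) as [HN|HN]; [right|left]; split; auto;
      destruct HA as [HA|HA].
    - destruct (valK1 A HA HN) as [Hop E]. split; auto. right; apply OYsub; auto.
    - destruct (valO1 A HA HN) as [HK E]. split; auto. left; auto.
    - destruct (valK0 A HA HN) as [HK E]. split; auto. left; auto.
    - destruct (valO0 A HA HN) as [Hop E]. split; auto. right; apply OYsub; auto.
      apply trace_sub. }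
  assert (mono_hat : forall A A', AY (hat_open opn O) A -> AY (hat_open opn O) A' ->
            subset A A' -> tauh A <= tauh A').
  { intros A A' HA HA' Hs.
    destruct (classify A HA) as [[HN [HT E]]|[HN [HT E]]];
    destruct (classify A' HA') as [[HN' [HT' E']]|[HN' [HT' E']]]; rewrite E, E'.
    - apply Hmono; auto. intros x [h Hx]. exists h; auto.
    - assert (Hd := disj_sum _ _ HT HT' (trace_sub A) (smsub _)).
      cut (tau (trace A) + tau (setminus O (trace A')) <= tau O); [lra|]. apply Hd.
      intros x [h Hx] [_ n]. apply n. exists h; auto.
    - exfalso; apply HN', Hs, HN.
    - cut (tau (setminus O (trace A')) <= tau (setminus O (trace A))); [lra|].
      apply Hmono; auto. intros x [Ox n]; split; auto. intros [h Hx]; apply n; exists h; auto. }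
  assert (add_case : forall A A', AY (hat_open opn O) A -> AY (hat_open opn O) A' ->
            disjoint A A' -> AY (hat_open opn O) (setU A A') -> A None -> ~ A' None ->
            tauh (setU A A') = tauh A + tauh A').
  { intros A A' HA HA' Hd HU HN HN'.
    destruct (classify A HA) as [[HN0 _]|[_ [HT E]]]; [contradiction|].
    destruct (classify A' HA') as [[_ [HT' E']]|[HN0 _]]; [|contradiction].
    destruct (classify _ HU) as [[HN0 _]|[_ [HTU EU]]]; [exfalso; apply HN0; left; auto|].
    rewrite E, E', EU.
    assert (EC : setminus O (trace A) = setU (setminus O (trace (setU A A'))) (trace A')).
    { apply pext; intro x; unfold setU, setminus; split.
      - intros [Ox n]. destruct (classic (trace A' x)) as [t|t]; [right; auto|left].
        split; auto. intros [h [Hx|Hx]]; [apply n| apply t]; exists h; auto.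
      - intros [[Ox n]|[h Hx]].
        + split; auto. intros [h Hx]; apply n; exists h; left; auto.
        + split; auto. intros [h' Hx']. apply (Hd _ Hx'). apply trace_some. exists h; auto. }
    assert (Hdd : disjoint (setminus O (trace (setU A A'))) (trace A')).
    { intros x [Ox n] [h Hx]. apply n. exists h. right; auto. }
    assert (HC : AY opn (setminus O (trace A))) by exact HT.
    rewrite EC in HC.
    assert (Ha := Hadd _ _ HTU HT' Hdd HC). rewrite EC, Ha. lra. }
  split; [|split; [|split; [|split]]].
  - intros A HA. destruct (classify A HA) as [[_ [HT E]]|[_ [HT E]]]; rewrite E; auto.
    assert (tau (setminus O (trace A)) <= tau O) by (apply Hmono; auto). lra.
  - intros A A' HA HA' Hd HU.
    destruct (classic (A None)) as [HN|HN]; destruct (classic (A' None)) as [HN'|HN'].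
    + exfalso; exact (Hd None HN HN').
    + apply add_case; auto.
    + assert (Es : setU A A' = setU A' A) by (apply pext; intro; unfold setU; tauto).
      rewrite Es in *. rewrite add_case; auto; [lra|]. intros p H H'; exact (Hd p H' H).
    + destruct (classify A HA) as [[_ [HT E]]|[HN0 _]]; [|contradiction].
      destruct (classify A' HA') as [[_ [HT' E']]|[HN0 _]]; [|contradiction].
      destruct (classify _ HU) as [[_ [HTU EU]]|[HN0 _]];
        [|destruct HN0; contradiction].
      assert (ET : trace (setU A A') = setU (trace A) (trace A')).
      { apply pext; intro x; unfold setU, trace; split.
        - intros [h [Hx|Hx]]; [left|right]; exists h; auto.
        - intros [[h Hx]|[h Hx]]; exists h; auto. }
      rewrite E, E', EU, ET. rewrite ET in HTU. apply Hadd; auto.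
      intros x [h Hx] [h' Hx']. apply (Hd _ Hx). apply trace_some. exists h'; auto.
  - exact mono_hat.
  - intros K HK. split.
    + intros r [U [HU [HKU ->]]]. apply mono_hat; [left| right|]; auto.
    + intros b Hb. destruct (classic (K None)) as [HN|HN].
      * destruct (valK1 K HK HN) as [Hop E]. rewrite E.
        set (U0 := setminus O (trace K)) in *.
        cut (tau U0 <= tau O - b); [lra|].
        apply (proj2 (Hreg2 U0 (OYsub U0 Hop (smsub _)))).
        intros r [K' [HK' [HK'U ->]]].
        assert (HK'O : subset K' O) by (intros x Hx; apply (smsub (trace K) x), HK'U, Hx).
        assert (Hbb : b <= tauh (lift O (setminus O K') True)).
        { apply Hb. exists (lift O (setminus O K') True). split; [|split; auto].
          - apply hat_OY; auto. apply hat_open_lift_co; auto.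
          - intros [[x h]|] Hp; simpl; auto. split; auto. intro Kx.
            destruct (HK'U x Kx) as [_ n]. apply n. exists h; auto. }
        rewrite H3, add_compl in Hbb; auto. lra.
      * destruct (valK0 K HK HN) as [HKc E]. rewrite E.
        apply (proj2 (Hreg1 _ HKc)). intros r [U [HU [HKU ->]]].
        assert (HUO : opn (fun x => U x /\ O x)) by (apply Hint; auto; apply HU).
        assert (Hbb : b <= tauh (lift O (fun x => U x /\ O x) False)).
        { apply Hb. eexists. split; [|split; [|reflexivity]].
          - apply hat_OY; auto. apply hat_open_lift_open; auto.
          - intros [[x h]|] Hp; simpl; [|contradiction]. split; auto.
            apply HKU. exists h; auto. }
        rewrite H1 in Hbb; auto; [|intros x [_ Ox]; auto].
        assert (tau (fun x => U x /\ O x) <= tau U).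
        { apply Hmono; [right; apply OYsub; auto; intros x [_ Ox]; auto| right; auto|].
          intros x [Ux _]; auto. }
        lra.
  - intros V HV. split.
    + intros r [K [HK [HKV ->]]]. apply mono_hat; [left| right|]; auto.
    + intros b Hb. destruct (classic (V None)) as [HN|HN].
      * destruct (valO1 V HV HN) as [HK0 E]. rewrite E.
        set (K0 := setminus O (trace V)) in *.
        cut (tau O - b <= tau K0); [lra|].
        apply (proj2 (Hreg1 K0 HK0)).
        intros r [U [HU [HKU ->]]].
        assert (HUO : opn (fun x => U x /\ O x)) by (apply Hint; auto; apply HU).
        assert (Hbb : tauh (lift O (setminus O (fun x => U x /\ O x)) True) <= b).
        { apply Hb. eexists. split; [|split; [|reflexivity]].
          - apply lift_co_compact; auto.
          - intros [[x h]|] Hp; simpl in *; auto. apply trace_some.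
            apply NNPP; intro nt. destruct Hp as [_ n]. apply n. split; auto.
            apply HKU. split; auto. }
        rewrite H4 in Hbb; auto; [|intros x [_ Ox]; auto].
        assert (tau (fun x => U x /\ O x) <= tau U).
        { apply Hmono; [right; apply OYsub; auto; intros x [_ Ox]; auto| right; auto|].
          intros x [Ux _]; auto. }
        lra.
      * destruct (valO0 V HV HN) as [Hop E]. rewrite E.
        apply (proj2 (Hreg2 _ (OYsub _ Hop (trace_sub V)))).
        intros r [K [HK [HKU ->]]].
        assert (HKO : subset K O) by (intros x Hx; apply (trace_sub V), HKU, Hx).
        assert (Hbb : tauh (lift O K False) <= b).
        { apply Hb. exists (lift O K False). split; [|split; auto].
          - apply lift_compact; auto.
          - intros [[x h]|] Hp; simpl in *; [|contradiction]. apply trace_some; auto. }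
        rewrite H2 in Hbb; auto.
Qed.
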